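(* Let $G_1$ and $G_2$ be two vertex-disjoint 2-edge-colored graphs with Hamiltonian alternating cycles $C_1=x_0x_1\cdots x_{2n-1}x_0$ and $C_2=y_0y_1\cdots y_{2m-1}y_0$, respectively, and let $G\in G_1\oplus G_2$. Suppose there is no good pair in $G$ (between $C_1$ and $C_2$), and that for each $i\in\{1,2\}$ there is a vertex of $C_i$ which is non-singular with respect to $C_{3-i}$. Let $m_1=\min\{n,m\}$ and $M_2=\max\{n,m\}$. Then for each vertex $v\in V(G)$ and each even integer $\ell\in[4m_1,2M_2]$, there is an alternating cycle of length $\ell$ in $G$ passing through $v$.
   Context: All graphs are simple, with edges colored red or blue. An alternating cycle is a cycle in which consecutive edges have different colors; a Hamiltonian alternating cycle of a graph is an alternating cycle through all its vertices. For vertex-disjoint 2-edge-colored graphs $G_1,G_2$, the colored generalized sum $G_1\oplus G_2$ is the set of 2-edge-colored graphs $G$ with $V(G)=V(G_1)\cup V(G_2)$, $G\langle V(G_i)\rangle=G_i$ with the same coloring, and exactly one edge (of arbitrary fixed color) between each $u\in V(G_1)$ and $w\in V(G_2)$; these latter edges are the exterior edges. For $v$ on an alternating cycle $C$, $v^r$ (resp. $v^b$) is the neighbor of $v$ on $C$ with $vv^r$ red (resp. $vv^b$ blue). For an exterior edge $vw$ with $v\in V(C_1)$, $w\in V(C_2)$: if $vw$ is red, $vw,v^rw^r$ is a good pair if $v^rw^r$ is red; if $vw$ is blue, $vw,v^bw^b$ is a good pair if $v^bw^b$ is blue. A vertex $v\in V(C_i)$ is singular with respect to $C_{3-i}$ if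 all edges between $v$ and $V(C_{3-i})$ have the same color, and non-singular otherwise. For integers $a\le b$, $[a,b]=\{a,a+1,\dots,b\}$. *)

(* Defs.v *)
From mathcomp Require Import all_boot.
Set Implicit Arguments. Unset Strict Implicit. Unset Printing Implicit Defensive.

Section AltCycles.
Variable T : finType.

(* A simple graph on T: adjacency relation [adj] (assumed symmetric and
   irreflexive in the theorem); edge colours [col x y] with true = red,
   false = blue (only meaningful on edges). *)
Definition simple_graph (adj : rel T) : Prop :=
  (forall x y, adj x y = adj y x) /\ (forall x, ~~ adj x x).

Definition sym_coloring (adj : rel T) (col : T -> T -> bool) : Prop :=
  forall x y, adj x y -> col x y = col y x.

(* An alternating cycle, given as the cyclic sequence of its (distinct)
   vertices; [next s] is the cyclic successor in s (path.v). *)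
Definition alt_cycle (adj : rel T) (col : T -> T -> bool) (s : seq T) : bool :=
  [&& uniq s, 2 < size s,
      all (fun v => adj v (next s v)) s &
      all (fun v => col v (next s v) != col (next s v) (next s (next s v))) s].

(* v^c : the neighbour of v on the cycle s joined to v by an edge of colour c
   (c = true gives v^r, c = false gives v^b). *)
Definition cnbr (col : T -> T -> bool) (s : seq T) (v : T) (c : bool) : T :=
  if col v (next s v) == c then next s v else prev s v.

(* There is a good pair between C1 and C2: an exterior edge vw of colour c
   such that v^c w^c also has colour c. *)
Definition has_good_pair (col : T -> T -> bool) (C1 C2 : seq T) : Prop :=
  exists v w, [/\ v \in C1, w \in C2 &
    col (cnbr col C1 v (col v w)) (cnbr col C2 w (col v w)) = col v w].

Definition non_singular (col : T -> T -> bool) (v : T) (C : seq T) : Prop :=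
  exists w1 w2, [/\ w1 \in C, w2 \in C & col v w1 != col v w2].

End AltCycles.

(* Main.v *)
Require Import Defs.
From mathcomp Require Import all_boot.
From mathcomp Require Import zify.
From Stdlib Require Import Classical_Prop.
Set Implicit Arguments. Unset Strict Implicit. Unset Printing Implicit Defensive.


Lemma next_nth_uniq (T : eqType) (p : seq T) x0 i : uniq p -> i < size p ->
  next p (nth x0 p i) = nth x0 p (i.+1 %% size p).
Proof.
move=> Up lti; rewrite next_nth mem_nth //.
case: p Up lti => [|y p'] // Up lti.
rewrite index_uniq //=; rewrite /= in lti.
have [lt|ge] := ltnP i (size p').
  by rewrite modn_small //= (set_nth_default x0).
have -> : i = size p' by lia.
by rewrite modnn /= nth_default.
Qed.

Lemma alt_bool (D : nat -> bool) (Q : nat) : 0 < Q ->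
  (forall k, D (k + Q.*2) = D k) ->
  (forall t, ~~ (D t.*2 && D t.*2.+1)) ->
  (forall t, D t.*2.+1 || D t.*2.+2) ->
  forall k, D k.+1 = ~~ D k.
Proof.
move=> Qp per ha hb.
have c1 : forall s u, D s.*2 -> D (s + u).*2.
  move=> s u; elim: u => [|u IH]; first by rewrite addn0.
  move=> /IH h; have := ha (s + u); rewrite h /= => h2.
  have := hb (s + u); rewrite (negbTE h2) /=.
  by rewrite addnS doubleS.
have c2 : forall s u, ~~ D s.*2.+1 -> ~~ D (s + u).*2.+1.
  move=> s u; elim: u => [|u IH]; first by rewrite addn0.
  move=> /IH h; have := hb (s + u); rewrite (negbTE h) /= => h2.
  have := ha (s + u).+1; rewrite -doubleS in h2; rewrite h2 /=.
  by rewrite addnS.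
move=> k; case: (odd_double_half k) => <-.
case: (odd k); set t := k./2.
- rewrite /= add1n.
  case Dt: (D t.*2.+1) => /=.
  + apply/negP => Dt2.
    have := c1 t.+1 (Q.-1) Dt2.
    have -> : (t.+1 + Q.-1).*2 = t.*2 + Q.*2 by lia.
    rewrite per => h.
    have := ha t; rewrite h Dt //.
  + by have := hb t; rewrite Dt.
- rewrite /= add0n.
  case Dt: (D t.*2) => /=.
  + by have := ha t; rewrite Dt /= => /negbTE.
  + apply/negP => /negP Dt1.
    have := c2 t (Q.-1) Dt1.
    have -> : (t + Q.-1).*2.+1 = (t.*2 + Q.*2).-1 by lia.
    move=> h.
    have := hb (t + Q.-1).
    have -> : (t + Q.-1).*2.+2 = t.*2 + Q.*2 by lia.
    have -> : (t + Q.-1).*2.+1 = (t.*2 + Q.*2).-1 by lia.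
    by rewrite (negbTE h) per Dt.
Qed.


Lemma mkseq_alt (T : finType) (adj : rel T) col (z : nat -> T) L a :
  2 < L -> ~~ odd L ->
  (forall i j, i < L -> j < L -> z i = z j -> i = j) ->
  (forall k, k < L -> adj (z k) (z (k.+1 %% L))) ->
  (forall k, k < L -> col (z k) (z (k.+1 %% L)) = ~~ odd (a + k)) ->
  alt_cycle adj col (mkseq z L).
Proof.
move=> L2 Le zinj zadj zcol.
set s := mkseq z L.
have sz : size s = L by rewrite size_mkseq.
have nths : forall k, k < L -> nth (z 0) s k = z k by move=> k kL; rewrite nth_mkseq.
have us : uniq s.
  rewrite /s /mkseq map_inj_in_uniq ?iota_uniq //.
  by move=> i j; rewrite !mem_iota /= !add0n; apply: zinj.
have mems : forall v, v \in s -> exists2 k, k < L & v = z k.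
  by move=> v /mapP [k]; rewrite mem_iota add0n /= => kL ->; exists k.
have nxt : forall k, k < L -> next s (z k) = z (k.+1 %% L).
  by move=> k kL; rewrite -nths // next_nth_uniq ?sz // nths // ltn_pmod //; lia.
apply/and4P; split => //; first by rewrite sz.
  by apply/allP => v /mems [k kL ->]; rewrite nxt // zadj.
apply/allP => v /mems [k kL ->]; rewrite nxt // nxt ?ltn_pmod; last by lia.
rewrite !zcol ?ltn_pmod //; last by lia.
have : odd (a + k.+1 %% L) = ~~ odd (a + k).
  have [lt|ge] := ltnP k.+1 L; first by rewrite modn_small // addnS.
  have -> : k.+1 = L by lia.
  rewrite modnn addn0; have -> : a + k = (a + L) - 1 by lia.
  rewrite oddB ?oddD; last lia. by move: Le; case: (odd L); case: (odd a).
by move=> ->; case: (odd (a + k)).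
by [].
Qed.


Lemma modinj a i j N : i < N -> j < N -> a + i = a + j %[mod N] -> i = j.
Proof. by move=> iN jN /eqP; rewrite eqn_modDl !modn_small // => /eqP. Qed.

Section Build.
Variables (T : finType) (adj : rel T) (col : T -> T -> bool) (X Y : nat -> T) (N M : nat).
Hypothesis adj_sym : forall x y, adj x y = adj y x.
Hypothesis col_sym : forall x y, adj x y -> col x y = col y x.
Hypothesis Xinj : forall i j, X i = X j -> i = j %[mod N].
Hypothesis Yinj : forall i j, Y i = Y j -> i = j %[mod M].
Hypothesis XY : forall i j, X i != Y j.
Hypothesis Xadj : forall i, adj (X i) (X i.+1).
Hypothesis Yadj : forall i, adj (Y i) (Y i.+1).
Hypothesis Xcol : forall i, col (X i) (X i.+1) = ~~ odd i.
Hypothesis Ycol : forall i, col (Y i) (Y i.+1) = ~~ odd i.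
Hypothesis XYadj : forall i j, adj (X i) (Y j).

Lemma cycle_build p q a c : 0 < p < N -> 0 < q < M -> ~~ odd (p + q) ->
  col (X (a + p)) (Y c) = ~~ odd (a + p) -> odd (a + p) != odd c ->
  col (X a) (Y (c + q)) = odd a ->
  exists s, [/\ alt_cycle adj col s, size s = p + q + 2, X a \in s & Y c \in s].
Proof.
move=> /andP[p0 pN] /andP[q0 qM] pq colb parb cola.
pose z k := if k <= p then X (a + k) else Y (c + (k - p.+1)).
pose L := p + q + 2.
have zX : forall k, k <= p -> z k = X (a + k) by move=> k kp; rewrite /z kp.
have zY : forall k, p < k -> z k = Y (c + (k - p.+1)) by move=> k kp; rewrite /z leqNgt kp.
have nxt : forall k, k < L -> k.+1 %% L = if k.+1 == L then 0 else k.+1.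
  move=> k kL; case: eqP => [->|ne]; first by rewrite modnn.
  by rewrite modn_small //; lia.
exists (mkseq z L); split; last first.
- have -> : Y c = z p.+1 by rewrite zY // subnn addn0.
  by apply/mapP; exists p.+1 => //; rewrite mem_iota /L; lia.
- have -> : X a = z 0 by rewrite zX // addn0.
  by apply/mapP; exists 0 => //; rewrite mem_iota /L; lia.
- by rewrite size_mkseq.

refine (@mkseq_alt T adj col z L a _ _ _ _ _).
- rewrite /L; lia.
- by rewrite /L addn2 /= negbK.
- move=> i j iL jL.
  have [ip|ip] := leqP i p; have [jp|jp] := leqP j p.
  + by rewrite !zX // => /Xinj /modinj; apply; lia.
  + by rewrite zX // zY // => /eqP; rewrite (negbTE (XY _ _)).
  + by rewrite zY // zX // => /esym /eqP; rewrite (negbTE (XY _ _)).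
  + rewrite !zY // => /Yinj /modinj h.
    have : i - p.+1 = j - p.+1 by apply: h; rewrite /L in iL jL; lia.
    lia.
- move=> k kL; rewrite nxt //; case: eqP => [kE|kne].
    rewrite (zX 0) // addn0 (zY k); last lia.
    have -> : k - p.+1 = q by lia.
    by rewrite adj_sym XYadj.
  have [kp|kp] := ltnP k p; first by rewrite !zX ?(ltnW kp) // addnS Xadj.
  case: (eqVneq k p) => [->|kp'].
    by rewrite zX // zY // subnn addn0 XYadj.
  rewrite !zY; try lia.
  by have -> : c + (k.+1 - p.+1) = (c + (k - p.+1)).+1 by lia.
- move=> k kL; rewrite nxt //; case: eqP => [kE|kne].
    rewrite (zX 0) // addn0 (zY k); last lia.
    have -> : k - p.+1 = q by lia.
    rewrite -col_sym ?XYadj // cola.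
    lia.
  have [kp|kp] := ltnP k p; first by rewrite !zX ?(ltnW kp) // addnS Xcol.
  case: (eqVneq k p) => [->|kp'].
    by rewrite zX // zY // subnn addn0 colb.
  rewrite !zY; try lia.
  have -> : c + (k.+1 - p.+1) = (c + (k - p.+1)).+1 by lia.
  rewrite Ycol; lia.
Qed.
End Build.


Lemma ivt (h : nat -> bool) s0 d : ~~ h s0 -> h (s0 + d) -> exists s, ~~ h s && h s.+1.
Proof.
elim: d s0 => [|d IH] s0; first by rewrite addn0 => /negbTE ->.
move=> h0; case h1: (h s0.+1); first by exists s0; rewrite h0 h1.
by rewrite -addSnnS; apply: IH; rewrite h1.
Qed.

Lemma ivt_per (h : nat -> bool) m a b : 0 < m -> (forall s, h (s + m) = h s) ->
  h a != h b -> exists s, ~~ h s && h s.+1.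
Proof.
move=> m0 per hab.
have perk : forall s k, h (s + k * m) = h s.
  move=> s; elim=> [|k IH]; first by rewrite addn0.
  by rewrite mulSn (addnC m) addnA per IH.
have [s0 [s1 [h0 h1]]] : exists s0 s1, ~~ h s0 /\ h s1.
  by move: hab; case ha: (h a); case hb: (h b) => //= _; [exists b, a | exists a, b]; rewrite ?ha ?hb.
apply: (@ivt h s0 (s1 + s0 * m - s0)) => //.
have -> : s0 + (s1 + s0 * m - s0) = s1 + s0 * m by nia.
by rewrite perk.
Qed.

Lemma arith1 b x N : 0 < N -> b + (x + N.-1 * b) = x + b * N.
Proof. move=> *; nia. Qed.

Section Core.
Variables (T : finType) (adj : rel T) (col : T -> T -> bool) (X Y : nat -> T) (n m : nat).
Let N := n.*2.
Let M := m.*2.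
Hypothesis n0 : 0 < n.
Hypothesis m0 : 0 < m.
Hypothesis Xper : forall i, X (i + N) = X i.
Hypothesis Yper : forall j, Y (j + M) = Y j.
Let F i j := col (X i) (Y j).
Hypothesis NGP : forall i j,
  F (if F i j == ~~ odd i then i.+1 else i + N.-1)
    (if F i j == ~~ odd j then j.+1 else j + M.-1) != F i j.

Lemma XperK i k : X (i + k * N) = X i.
Proof. elim: k => [|k IH]; first by rewrite addn0. by rewrite mulSn (addnC N) addnA Xper IH. Qed.
Lemma YperK j k : Y (j + k * M) = Y j.
Proof. elim: k => [|k IH]; first by rewrite addn0. by rewrite mulSn (addnC M) addnA Yper IH. Qed.

Lemma Fper i j k l : F (i + k * N) (j + l * M) = F i j.
Proof. by rewrite /F XperK YperK. Qed.

Lemma K2 i j : odd i != odd j -> F i.+1 (j + M.-1) = ~~ F i j.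
Proof.
have key : forall i0 j0, ~~ odd i0 -> odd j0 -> forall k,
    F (i0 + k.+1) (j0 + k.+1 * M.-1) = ~~ F (i0 + k) (j0 + k * M.-1).
  move=> i0 j0 ei0 oj0.
  pose D k := F (i0 + k) (j0 + k * M.-1).
  apply: (@alt_bool D (n * M)); first by rewrite muln_gt0 n0 /M double_gt0.
  - move=> k; rewrite /D.
    have -> : i0 + (k + (n * M).*2) = i0 + k + M * N by rewrite /N; nia.
    have -> : j0 + (k + (n * M).*2) * M.-1 = j0 + k * M.-1 + (N * M.-1) * M by rewrite /N; nia.
    by rewrite Fper.
  - move=> t; rewrite /D; apply/negP => /andP [h1 h2].
    have := NGP (i0 + t.*2) (j0 + t.*2 * M.-1).
    have pi : odd (i0 + t.*2) = false by rewrite oddD odd_double addbF (negbTE ei0).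
    have pj : odd (j0 + t.*2 * M.-1) = true by rewrite oddD oddM odd_double oj0.
    rewrite h1 pi pj /=.
    have -> : (i0 + t.*2).+1 = i0 + t.*2.+1 by rewrite addnS.
    have -> : j0 + t.*2 * M.-1 + M.-1 = j0 + t.*2.+1 * M.-1 by rewrite mulSn; lia.
    by rewrite h2.
  - move=> t; rewrite /D; case h1: (F (i0 + t.*2.+1) _) => //=.
    have := NGP (i0 + t.*2.+1) (j0 + t.*2.+1 * M.-1).
    have pi : odd (i0 + t.*2.+1) = true by rewrite oddD /= odd_double (negbTE ei0).
    have pj : odd (j0 + t.*2.+1 * M.-1) = false.
      rewrite oddD oddM /= odd_double /M.
      have -> : (m.*2).-1 = (m.-1).*2.+1 by lia.
      by rewrite /= odd_double oj0.
    rewrite h1 pi pj /=.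
    have -> : (i0 + t.*2.+1).+1 = i0 + t.*2.+2 by lia.
    have -> : j0 + t.*2.+1 * M.-1 + M.-1 = j0 + t.*2.+2 * M.-1 by rewrite (mulSn _ (M.-1)); lia.
    by case: (F _ _).
move=> hij.
case oi: (odd i).
- have ej : odd j = false by move: hij; rewrite oi; case: (odd j).
  have := key (i + N.-1) j.+1.
  have e1 : ~~ odd (i + N.-1).
    rewrite oddD oi /N; have -> : (n.*2).-1 = (n.-1).*2.+1 by lia.
    by rewrite /= odd_double.
  move=> /(_ e1); rewrite /= ej => /(_ isT 1).
  have -> : i + N.-1 + 2 = i.+1 + 1 * N by rewrite /N; lia.
  have -> : j.+1 + 2 * M.-1 = (j + M.-1) + 1 * M by rewrite /M; lia.
  have -> : i + N.-1 + 1 = i + 1 * N by rewrite /N; lia.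
  have -> : j.+1 + 1 * M.-1 = j + 1 * M by rewrite /M; lia.
  by rewrite /F !XperK !YperK.
- have oj : odd j by move: hij; rewrite oi; case: (odd j).
  have := key i j; rewrite oi => /(_ isT oj 0).
  by rewrite addn0 mul0n addn0 mul1n addn1.
Qed.
Lemma K1 i j : odd i = odd j -> F i.+1 j.+1 = ~~ F i j.
Proof.
have key : forall i0 j0, ~~ odd i0 -> ~~ odd j0 -> forall k,
    F (i0 + k.+1) (j0 + k.+1) = ~~ F (i0 + k) (j0 + k).
  move=> i0 j0 ei0 ej0.
  pose D k := F (i0 + k) (j0 + k).
  apply: (@alt_bool D (n * M)); first by rewrite muln_gt0 n0 /M double_gt0.
  - move=> k; rewrite /D.
    have -> : i0 + (k + (n * M).*2) = i0 + k + M * N by rewrite /N; nia.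
    have -> : j0 + (k + (n * M).*2) = j0 + k + N * M by rewrite /N; nia.
    by rewrite Fper.
  - move=> t; rewrite /D; apply/negP => /andP [h1 h2].
    have := NGP (i0 + t.*2) (j0 + t.*2).
    have pi : odd (i0 + t.*2) = false by rewrite oddD odd_double addbF (negbTE ei0).
    have pj : odd (j0 + t.*2) = false by rewrite oddD odd_double addbF (negbTE ej0).
    by rewrite h1 pi pj /= -!addnS h2.
  - move=> t; rewrite /D; case h1: (F (i0 + t.*2.+1) _) => //=.
    have := NGP (i0 + t.*2.+1) (j0 + t.*2.+1).
    have pi : odd (i0 + t.*2.+1) = true by rewrite oddD /= odd_double (negbTE ei0).
    have pj : odd (j0 + t.*2.+1) = true by rewrite oddD /= odd_double (negbTE ej0).
    rewrite h1 pi pj /= -!addnS.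
    by case: (F _ _).
move=> hij.
case oi: (odd i).
- have oj : odd j by rewrite -hij.
  have e1 : ~~ odd (i + N.-1).
    rewrite oddD oi /N; have -> : (n.*2).-1 = (n.-1).*2.+1 by lia.
    by rewrite /= odd_double.
  have e2 : ~~ odd (j + M.-1).
    rewrite oddD oj /M; have -> : (m.*2).-1 = (m.-1).*2.+1 by lia.
    by rewrite /= odd_double.
  have := key _ _ e1 e2 1.
  have -> : i + N.-1 + 2 = i.+1 + 1 * N by rewrite /N; lia.
  have -> : j + M.-1 + 2 = j.+1 + 1 * M by rewrite /M; lia.
  have -> : i + N.-1 + 1 = i + 1 * N by rewrite /N; lia.
  have -> : j + M.-1 + 1 = j + 1 * M by rewrite /M; lia.
  by rewrite /F !XperK !YperK.
- have ej : ~~ odd j by rewrite -hij oi.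
  have := key i j; rewrite oi => /(_ isT ej 0).
  by rewrite !addn0 !addn1.
Qed.
Let G i j := F i j == odd i.

Lemma Ginv1 i j : odd i = odd j -> G i.+1 j = G i j.+1.
Proof.
move=> hij.
have h : odd i != odd j.+1 by rewrite /= hij; case: (odd j).
have := K2 h.
have -> : j.+1 + M.-1 = j + 1 * M by rewrite /M; lia.
rewrite /G /F YperK => ->; rewrite /=.
by case: (col _ _); case: (odd i).
Qed.

Lemma Ginv k i j : odd (i + k) != odd j -> G (i + k) j = G i (j + k).
Proof.
elim: k j => [|k IH] j; first by rewrite !addn0.
move=> hp; rewrite addnS Ginv1; last first.
  by move: hp; rewrite addnS /=; case: (odd (i + k)); case: (odd j).
rewrite IH; first by rewrite addSnnS.
by move: hp; rewrite addnS /=; case: (odd (i + k)); case: (odd j).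
Qed.

Lemma GperX i j k : G (i + k * N) j = G i j.
Proof. by rewrite /G /F XperK oddD oddM /N odd_double andbF addbF. Qed.

Lemma GperY i j k : G i (j + k * M) = G i j.
Proof. by rewrite /G /F YperK. Qed.

Lemma GperN i j k : odd i != odd j -> G i (j + k * N) = G i j.
Proof.
move=> hp; elim: k => [|k IH]; first by rewrite addn0.
rewrite mulSn (addnC N) addnA -Ginv.
  by have := GperX i (j + k * N) 1; rewrite mul1n => ->.
by rewrite oddD oddD oddM /N odd_double andbF !addbF.
Qed.

Hypothesis adj_sym : forall x y, adj x y = adj y x.
Hypothesis col_sym : forall x y, adj x y -> col x y = col y x.
Hypothesis Xinj : forall i j, X i = X j -> i = j %[mod N].
Hypothesis Yinj : forall i j, Y i = Y j -> i = j %[mod M].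
Hypothesis XY : forall i j, X i != Y j.
Hypothesis Xadj : forall i, adj (X i) (X i.+1).
Hypothesis Yadj : forall i, adj (Y i) (Y i.+1).
Hypothesis Xcol : forall i, col (X i) (X i.+1) = ~~ odd i.
Hypothesis Ycol : forall i, col (Y i) (Y i.+1) = ~~ odd i.
Hypothesis XYadj : forall i j, adj (X i) (Y j).

Lemma core l v : 2 <= n -> n <= m -> ~~ odd l -> 4 * n <= l <= 2 * m ->
  (exists i j j', [/\ odd i != odd j, odd j = odd j' & F i j != F i j']) ->
  (exists i, v = X i) \/ (exists j, v = Y j) ->
  exists s, [/\ alt_cycle adj col s, size s = l & v \in s].
Proof.
move=> hn hnm le /andP [hl1 hl2] ne hv.
have [ia [ja [pij g0 g1]]] : exists ia ja,
    [/\ odd ia != odd ja, G ia ja = false & G ia (ja + 2) = true].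
  case: ne => i [j [j' [pij pjj fne]]].
  wlog lejj : j j' pij pjj fne / j <= j'.
    move=> W; case: (leqP j j') => h; first exact: (W j j').
    apply: (W j' j) => //; first by rewrite -pjj.
      by rewrite eq_sym.
    exact: ltnW.
  pose h s := G i (j + s.*2).
  have hper : forall s, h (s + m) = h s.
    by move=> s; rewrite /h doubleD addnA -(mul1n (m.*2)) GperY.
  have hne : h 0 != h ((j' - j)./2).
    rewrite /h.
    have -> : j + ((j' - j)./2).*2 = j' by lia.
    rewrite addn0 /G.
    by move: fne; case: (F i j); case: (F i j'); case: (odd i).
  have [s /andP [hs1 hs2]] := ivt_per m0 hper hne.
  exists i, (j + s.*2); split.
  - by rewrite oddD odd_double addbF.
  - by move: hs1; rewrite /h => /negbTE.
  - by move: hs2; rewrite /h doubleS -addnA addn2.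
pose hh := l./2 - 3.
have lE : l = hh.*2 + 6 by rewrite /hh; lia.
pose p := hh %% n + 1.
pose K := hh %/ n.
pose q := l - 2 - p.
have hhE : hh = K * n + hh %% n by rewrite /K -divn_eq.
have rlt : hh %% n < n by rewrite ltn_pmod.
have qE : q = p + 2 + K * N by rewrite /q /p /N; lia.
have pn : 0 < p <= n by rewrite /p; lia.
have qm : 0 < q < M by rewrite /q /M; lia.
have pql : p + q + 2 = l by rewrite /q; lia.
clearbody q p K hh; clear hhE rlt lE.
have fin : forall a c, G (a + p) c = false -> G (a + p) (c + 2 + K * N) = true ->
    odd (a + p) != odd c ->
    exists s, [/\ alt_cycle adj col s, size s = l, X a \in s & Y c \in s].
  move=> a c ga gb pb.
  have pc : odd (a + p) != odd (c + 2 + K * N).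
    by rewrite [odd (c + 2 + _)]oddD oddM /N odd_double andbF addbF addn2 /= negbK.
  have := @cycle_build _ _ _ _ _ _ _ adj_sym col_sym Xinj Yinj XY Xadj Yadj Xcol Ycol XYadj p q a c.
  case.
  - rewrite /N; apply/andP; split; lia.
  - exact: qm.
  - by move: le; rewrite -pql addn2 /= negbK.
  - by move: ga; rewrite /G /F; case: (col _ _); case: (odd _).
  - exact: pb.
  - have -> : c + q = (c + 2 + K * N) + p by rewrite qE; lia.
    have e := @Ginv p a (c + 2 + K * N) pc.
    rewrite e in gb.
    by move/eqP: gb.
  move=> s [s1 s2 s3 s4]; exists s; split => //.
  by rewrite s2.
have oddKN : forall x, odd (x + 2 + K * N) = odd x.
  by move=> x; rewrite [odd (x + 2 + _)]oddD oddM /N odd_double andbF addbF addn2 /= negbK.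
have oddN : forall x y, odd (x + y * N) = odd x.
  by move=> x y; rewrite oddD oddM /N odd_double andbF addbF.
have oddM' : forall x y, odd (x + y * M) = odd x.
  by move=> x y; rewrite oddD oddM /M odd_double andbF addbF.
case: hv => [[i0 ->]|[j0 ->]].
- pose t := ia + N.-1 * (i0 + p).
  have bt : i0 + p + t = ia + (i0 + p) * N by rewrite /t arith1 // /N double_gt0.
  clearbody t.
  have pbt : odd (i0 + p + t) = odd ia by rewrite bt oddN.
  have := fin i0 (ja + t); case.
  + rewrite -(@Ginv t (i0 + p) ja); last by rewrite pbt.
    by rewrite bt GperX.
  + have -> : ja + t + 2 + K * N = (ja + 2 + K * N) + t by lia.
    rewrite -(@Ginv t (i0 + p)); last by rewrite pbt oddKN.
    by rewrite bt GperX GperN // addn2 /= negbK.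
  + move: pbt pij; rewrite !oddD.
    by case: (odd i0); case: (odd p); case: (odd t); case: (odd ia); case: (odd ja).
  by move=> s [s1 s2 s3 s4]; exists s.
- pose t := ja + M.-1 * j0.
  have jt : j0 + t = ja + j0 * M by rewrite /t arith1 // /M double_gt0.
  clearbody t.
  have ptj : odd (j0 + t) = odd ja by rewrite jt oddM'.
  pose a := ia + t + N - p.
  have ab : a + p = (ia + t) + 1 * N by rewrite /a /N; lia.
  have cnd : odd (ia + t) != odd j0.
    by move: ptj pij; rewrite !oddD; case: (odd ia); case: (odd t); case: (odd j0); case: (odd ja).
  have := fin a j0; case.
  + by rewrite ab GperX Ginv // jt GperY.
  + rewrite ab GperX Ginv; last by rewrite oddKN.
    have -> : j0 + 2 + K * N + t = (ja + 2 + K * N) + j0 * M by lia.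
    by rewrite GperY GperN // addn2 /= negbK.
  + by rewrite ab oddN.
  by move=> s [s1 s2 s3 s4]; exists s.
Qed.

End Core.


Section Top.
Variables (T : finType) (adj : rel T) (col : T -> T -> bool).
Hypothesis adj_sym : forall x y, adj x y = adj y x.
Hypothesis col_sym : forall x y, adj x y -> col x y = col y x.

Lemma alt_rev C : alt_cycle adj col C -> alt_cycle adj col (rev C).
Proof.
case/and4P => uC sC aC cC.
have uC' := uC.
apply/and4P; split; rewrite ?rev_uniq ?size_rev //.
- apply/allP => v; rewrite mem_rev => vC; rewrite next_rev //.
  rewrite adj_sym.
  have := allP aC (prev C v); rewrite mem_prev next_prev //; exact.
- apply/allP => v; rewrite mem_rev => vC; rewrite !next_rev //.
  have pC : prev C v \in C by rewrite mem_prev.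
  have ppC : prev C (prev C v) \in C by rewrite !mem_prev.
  have := allP cC _ ppC; rewrite !next_prev //.
  have a1 := allP aC _ pC; have a2 := allP aC _ ppC.
  rewrite next_prev // in a1; rewrite next_prev // in a2.
  by rewrite (col_sym a1) (col_sym a2) eq_sym.
Qed.

Definition idx_ok (C : seq T) S (eps : bool) (z : nat -> T) : Prop :=
  [/\ (forall i, z (i + S) = z i), (forall i j, z i = z j -> i = j %[mod S]),
      (forall i, z i \in C), (forall v, v \in C -> exists i, v = z i) &
   [/\ (forall i, adj (z i) (z i.+1)), (forall i, col (z i) (z i.+1) = ~~ odd i),
      (forall i c, cnbr col C (z i) c = if c == ~~ odd i then z i.+1 else z (i + S.-1)) &
      (forall i, col (z i) (next C (z i)) = (odd i == eps))]].

Lemma gen_idx (C D : seq T) k (x0 : T) (eps : bool) :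
  alt_cycle adj col D -> size D = k.*2 -> D =i C ->
  (forall v, next C v = if eps then prev D v else next D v) ->
  (forall v, prev C v = if eps then next D v else prev D v) ->
  exists z, idx_ok C k.*2 eps z.
Proof.
move=> altD sD DC nC pC.
case/and4P: (altD) => uD sD2 aD cD.
set S := k.*2 in sD *.
have S0 : 0 < S by rewrite -sD; lia.
pose w i := nth x0 D (i %% S).
have wD : forall i, w i \in D by move=> i; rewrite mem_nth // sD ltn_pmod.
have nw : forall i, next D (w i) = w i.+1.
  move=> i; rewrite /w next_nth_uniq ?sD ?ltn_pmod //.
  by rewrite -addn1 modnDml addn1.
have aw : forall i, adj (w i) (w i.+1) by move=> i; rewrite -nw (allP aD).
have Ew : forall i, col (w i.+1) (w i.+2) = ~~ col (w i) (w i.+1).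
  by move=> i; have := allP cD _ (wD i); rewrite !nw; case: (col _ _); case: (col _ _).
pose o := if col (w 0) (w 1) then 0 else 1.
pose z i := w (o + i).
have zc : forall i, col (z i) (z i.+1) = ~~ odd i.
  elim=> [|i IH]; first by rewrite /z /o; case e: (col (w 0) (w 1)); rewrite /= ?e ?Ew ?e.
  by rewrite /z !addnS Ew -addnS -/(z i) -/(z i.+1) IH /=.
have zper : forall i, z (i + S) = z i by move=> i; rewrite /z /w addnA modnDr.
have nz : forall i, next D (z i) = z i.+1 by move=> i; rewrite /z nw addnS.
have pz : forall i, prev D (z i) = z (i + S.-1).
  move=> i; rewrite -[z i]zper.
  have -> : i + S = (i + S.-1).+1 by lia.
  by rewrite -nz prev_next.
have cprev : forall i, col (z i) (z (i + S.-1)) = odd i.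
  move=> i.
  have a1 : adj (z (i + S.-1)) (z (i + S.-1).+1) by rewrite /z addnS; apply: aw.
  have c1 := zc (i + S.-1).
  have e : (i + S.-1).+1 = i + S by lia.
  rewrite e zper in a1 c1.
  rewrite -(col_sym a1) c1.
  have -> : odd (i + S.-1) = ~~ odd i.
    rewrite /S; have -> : (k.*2).-1 = (k.-1).*2.+1 by lia.
    by rewrite oddD /= odd_double; case: (odd i).
  by rewrite negbK.
have zC : forall i, z i \in C by move=> i; rewrite -DC wD.
exists z; split => //.
- move=> i j; rewrite /z /w => /eqP; rewrite nth_uniq ?sD ?ltn_pmod // => /eqP.
  by move=> /eqP; rewrite eqn_modDl => /eqP.
- move=> v; rewrite -DC => vD.
  exists (index v D + S - o); rewrite /z /w.
  have -> : o + (index v D + S - o) = index v D + S by rewrite /o; case: ifP => _; lia.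
  by rewrite modnDr modn_small ?nth_index // -sD index_mem.
split => //.
- by move=> i; rewrite -nz (allP aD) // DC.
- move=> i c; rewrite /cnbr nC pC.
  case: eps nC pC => nC pC.
  + rewrite pz nz.
    by rewrite cprev; case: c; case: (odd i).
  + by rewrite nz pz zc eq_sym.
- move=> i; rewrite nC; case: eps {nC pC}.
  + by rewrite pz cprev; case: (odd i).
  + by rewrite nz zc; case: (odd i).
Qed.

Lemma l_n2 n : 2 < 2 * n -> 1 < n. Proof. lia. Qed.
Lemma l_pred2 j m : 0 < m -> (j + (m.*2).-1).+1 = j + m.*2. Proof. lia. Qed.
Lemma l_pred2' j m : 0 < m -> j.+1 + (m.*2).-1 = j + m.*2. Proof. lia. Qed.
Lemma l_shift a i0 n : 0 < n -> a + i0 * n.*2 = i0 + (a + i0 * n.*2 - i0). Proof. nia. Qed.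

Lemma perK (z : nat -> T) S : (forall i, z (i + S) = z i) -> forall i k, z (i + k * S) = z i.
Proof. move=> h i; elim=> [|k IH]; first by rewrite addn0. by rewrite mulSn (addnC S) addnA h IH. Qed.

Lemma oddpred2 j m : 0 < m -> odd (j + (m.*2).-1) = ~~ odd j.
Proof. move=> m0; have -> : (m.*2).-1 = (m.-1).*2.+1 by lia. by rewrite oddD /= odd_double; case: (odd j). Qed.

Lemma ngp_idx C1 C2 N M e1 e2 X Y : idx_ok C1 N e1 X -> idx_ok C2 M e2 Y ->
  ~ has_good_pair col C1 C2 -> forall i j,
  col (X (if col (X i) (Y j) == ~~ odd i then i.+1 else i + N.-1))
      (Y (if col (X i) (Y j) == ~~ odd j then j.+1 else j + M.-1)) != col (X i) (Y j).
Proof.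
move=> [_ _ XC _ [_ _ cnX _]] [_ _ YC _ [_ _ cnY _]] ngp i j.
apply/negP => /eqP E; apply: ngp; exists (X i), (Y j); split => //.
by rewrite (fun_if X) (fun_if Y) in E; rewrite cnX cnY.
Qed.

Lemma main_le (C1 C2 : seq T) (n m : nat) :
  [disjoint C1 & C2] -> (forall x : T, (x \in C1) || (x \in C2)) ->
  alt_cycle adj col C1 -> alt_cycle adj col C2 ->
  size C1 = (2 * n)%N -> size C2 = (2 * m)%N ->
  (forall u w, u \in C1 -> w \in C2 -> adj u w) ->
  ~ has_good_pair col C1 C2 ->
  (exists v, v \in C1 /\ non_singular col v C2) ->
  (exists v, v \in C2 /\ non_singular col v C1) -> n <= m ->
  forall (v : T) (l : nat), ~~ odd l ->
    (4 * n <= l <= 2 * m)%N ->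
    exists s : seq T, [/\ alt_cycle adj col s, size s = l & v \in s].
Proof.
move=> dis cov alt1 alt2 s1 s2 adjX ngp [x1 [x1C [w1 [w2 [w1C w2C cw]]]]]
  [y1 [y1C [u1 [u2 [u1C u2C cu]]]]] nm v l le hl.
have n2 : 1 < n by case/and4P: alt1 => _ sz _ _; rewrite s1 in sz; apply: l_n2.
have n0 : 0 < n by apply: ltnW.
have m0 : 0 < m by apply: leq_trans nm.
have uC2 : uniq C2 by case/and4P: alt2.
rewrite !mul2n in s1 s2.
have [X idX] := @gen_idx C1 C1 n v false alt1 s1 (fun _ => erefl) (fun _ => erefl) (fun _ => erefl).
have [Yf idYf] := @gen_idx C2 C2 m v false alt2 s2 (fun _ => erefl) (fun _ => erefl) (fun _ => erefl).
have [Yr idYr] := @gen_idx C2 (rev C2) m v true (alt_rev alt2) (etrans (size_rev C2) s2)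
   (@mem_rev _ C2) (fun w => esym (prev_rev uC2 w)) (fun w => esym (next_rev uC2 w)).
have app : forall e Y, idx_ok C2 m.*2 e Y ->
    (exists i j j', [/\ odd i != odd j, odd j = odd j' & col (X i) (Y j) != col (X i) (Y j')]) ->
    exists s : seq T, [/\ alt_cycle adj col s, size s = l & v \in s].
  move=> e Y idY ne.
  have ngpY := ngp_idx idX idY ngp.
  case: idX => Xper Xinj XC Xsurj [Xadj Xcol Xcn Xnx].
  case: idY => Yper Yinj YC Ysurj [Yadj Ycol Ycn Ynx].
  apply: (core n0 m0 Xper Yper ngpY adj_sym col_sym Xinj Yinj _ Xadj Yadj Xcol Ycol _ n2 nm le hl ne).
  - move=> i j; apply/eqP => e'; have := disjointFr dis (XC i); by rewrite e' YC.
  - move=> i j; exact: adjX (XC i) (YC j).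
  - by case/orP: (cov v) => vC; [left; exact: Xsurj | right; exact: Ysurj].
have [A|nA] := classic (exists i j j', [/\ odd i != odd j, odd j = odd j' &
                        col (X i) (Yf j) != col (X i) (Yf j')]).
  exact: app idYf A.
have [B|nB] := classic (exists i j j', [/\ odd i = odd j, odd j = odd j' &
                        col (X i) (Yf j) != col (X i) (Yf j')]).
  apply: (app _ _ idYr).
  case: B => i [j [j' [h1 h2 h3]]].
  case: (idYf) => _ _ YfC _ [_ _ _ Yfnx].
  case: (idYr) => _ _ _ Yrs [_ _ _ Yrnx].
  have par : forall a b, Yf a = Yr b -> odd b = ~~ odd a.
    move=> a b e; have := Yfnx a; have := Yrnx b; rewrite -e => ->.
    by case: (odd a); case: (odd b).
  have [jr ejr] := Yrs _ (YfC j).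
  have [jr' ejr'] := Yrs _ (YfC j').
  exists i, jr, jr'; split.
  - by rewrite (par _ _ ejr) h1; case: (odd j).
  - by rewrite (par _ _ ejr) (par _ _ ejr') h2.
  - by rewrite -ejr -ejr'.
exfalso.
have cst : forall i j j', odd j = odd j' -> col (X i) (Yf j) = col (X i) (Yf j').
  move=> i j j' hjj; apply/eqP/negPn/negP => hne.
  case: (eqVneq (odd i) (odd j)) => hij.
  - by apply: nB; exists i, j, j'.
  - by apply: nA; exists i, j, j'.
case: (idX) => Xper Xinj XC Xsurj [Xadj Xcol Xcn Xnx].
case: (idYf) => Yfper Yfinj YfC Yfsurj [Yfadj Yfcol Yfcn Yfnx].
have ngpf := ngp_idx idX idYf ngp.
have k1 := K1 n0 m0 Xper Yfper ngpf.
have k2 := K2 n0 m0 Xper Yfper ngpf.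
have [i0 ex1] := Xsurj _ x1C.
have [j1 ew1] := Yfsurj _ w1C.
have [j2 ew2] := Yfsurj _ w2C.
rewrite ex1 ew1 ew2 in cw.
have pj : odd j1 != odd j2.
  by apply/negP => /eqP h; rewrite (cst _ _ _ h) eqxx in cw.
have row0 : forall j, col (X i0) (Yf j) =
    if odd j == odd j1 then col (X i0) (Yf j1) else col (X i0) (Yf j2).
  move=> j; case: eqP => h; apply: cst => //.
  by move: h pj; case: (odd j); case: (odd j1); case: (odd j2).
have R : forall i, (forall j, col (X i) (Yf j) = col (X i0) (Yf j)) ->
    forall j j', odd j != odd j' -> col (X i) (Yf j) != col (X i) (Yf j').
  move=> i hi j j' hjj; rewrite (hi j) (hi j') (row0 j) (row0 j').
  move: hjj pj cw; case: (odd j); case: (odd j'); case: (odd j1); case: (odd j2) => //=;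
    by rewrite eq_sym.
have rows : forall k j, col (X (i0 + k)) (Yf j) = col (X i0) (Yf j).
  elim=> [|k IH] j; first by rewrite addn0.
  have Ri := R _ IH.
  rewrite addnS.
  case: (eqVneq (odd (i0 + k)) (odd (j + (m.*2).-1))) => hp.
  - have := k1 _ _ hp; rewrite /=.
    rewrite l_pred2 //.
    rewrite Yfper => ->.
    have hne : col (X (i0 + k)) (Yf j) != col (X (i0 + k)) (Yf (j + (m.*2).-1)).
      by apply: Ri; rewrite oddpred2 //; case: (odd j).
    rewrite -IH; move: hne; by case: (col _ _); case: (col _ _).
  - have hp' : odd (i0 + k) != odd j.+1 by move: hp; rewrite oddpred2.
    have := k2 _ _ hp'; rewrite /=.
    rewrite l_pred2' //.
    rewrite Yfper => ->.
    have hne : col (X (i0 + k)) (Yf j) != col (X (i0 + k)) (Yf j.+1).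
      by apply: Ri; rewrite /=; case: (odd j).
    rewrite -IH; move: hne; by case: (col _ _); case: (col _ _).
have [b eb] := Yfsurj _ y1C.
have [a1 ea1] := Xsurj _ u1C.
have [a2 ea2] := Xsurj _ u2C.
have fa : forall a, col (X a) (Yf b) = col (X i0) (Yf b).
  move=> a; rewrite -(perK Xper a i0).
  rewrite l_shift //.
rewrite eb ea1 ea2 in cu.
move: cu; rewrite -!(col_sym (adjX _ _ (XC _) (YfC b))) !fa.
by rewrite eqxx.
Qed.

End Top.


Lemma cnbr_mem (T : finType) col (C : seq T) v c : v \in C -> cnbr col C v c \in C.
Proof. by move=> vC; rewrite /cnbr; case: ifP => _; rewrite ?mem_next ?mem_prev. Qed.

Unset Implicit Arguments.

Theorem proposition3p12 (T : finType) (adj : rel T) (col : T -> T -> bool)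
    (C1 C2 : seq T) (n m : nat) :
  simple_graph adj -> sym_coloring adj col ->
  [disjoint C1 & C2] -> (forall x : T, (x \in C1) || (x \in C2)) ->
  alt_cycle adj col C1 -> alt_cycle adj col C2 ->
  size C1 = (2 * n)%N -> size C2 = (2 * m)%N ->
  (forall u w, u \in C1 -> w \in C2 -> adj u w) ->
  ~ has_good_pair col C1 C2 ->
  (exists v, v \in C1 /\ non_singular col v C2) ->
  (exists v, v \in C2 /\ non_singular col v C1) ->
  forall (v : T) (l : nat), ~~ odd l ->
    (4 * minn n m <= l <= 2 * maxn n m)%N ->
    exists s : seq T, [/\ alt_cycle adj col s, size s = l & v \in s].
Proof.
move=> [asym _] csym dis cov alt1 alt2 s1 s2 adjX ngp ns1 ns2 v l le hl.
case: (leqP n m) => nm.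
  rewrite (minn_idPl nm) (maxn_idPr nm) in hl.
  exact: (main_le asym csym dis cov alt1 alt2 s1 s2 adjX ngp ns1 ns2 nm v le hl).
rewrite (minn_idPr (ltnW nm)) (maxn_idPl (ltnW nm)) in hl.
apply: (main_le asym csym _ _ alt2 alt1 s2 s1 _ _ ns2 ns1 (ltnW nm) v le hl).
- by rewrite disjoint_sym.
- by move=> x; rewrite orbC.
- by move=> u w uC wC; rewrite asym; apply: adjX.
- move=> [w [u [wC uC e]]]; apply: ngp; exists u, w; split => //.
  have cuw : col u w = col w u by apply: csym; apply: adjX.
  rewrite cuw -[RHS]e; apply: csym; apply: adjX; exact: cnbr_mem.
Qed.
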